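(* Let $O^4$ be the set of odd-parity 4-bit strings, let $u=u_1u_2u_3u_4\in O^4$ and let $u'$ be its bitwise complement ($u\oplus u'=1111$). Let $n\ge1$ and let four parties (the first being Alice) hold $X_j=(x^j_1,\dots,x^j_n)\in\{0,1\}^n$, $j=1,\dots,4$, under the promise that $x_i^1x_i^2x_i^3x_i^4\in A$ for all $i$, where $A\subseteq O^4\setminus\{u'\}$ is any fixed set. Let $f_u(X_1,X_2,X_3,X_4)=\bigoplus_{i=1}^n t_u(x_i^1x_i^2x_i^3x_i^4)$ with $t_u(w)=1$ if $w=u$ and $0$ otherwise. Suppose the parties share $n$ copies of $|\psi_4\rangle=2^{-3/2}\big(\sum_{v\in\{0,1\}^4,\,|v|=1}|v\rangle-\sum_{v\in\{0,1\}^4,\,|v|=3}|v\rangle\big)$ (where $|v|$ is the Hamming weight), the $j$-th qubit of each copy held by party $j$. Then there is a protocol in which, for each $i$, party $j$ applies the Hadamard gate $H$ to its qubit of the $i$-th copy if $x_i^j\ne u_j$ and the identity otherwise, measures in the computational basis, performs local classical computation, and parties $2,3,4$ each send one classical bit to Alice (three classical bits in total), after which Alice outputs $f_u(X_1,X_2,X_3,X_4)$ correctly for every input satisfying the promise.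
   Context: $H$ is the Hadamard gate $H|0\rangle=(|0\rangle+|1\rangle)/\sqrt2$, $H|1\rangle=(|0\rangle-|1\rangle)/\sqrt2$. Communication consists only of classical bits sent to Alice; no quantum communication is allowed. *)

(* Defs.v *)
(* Real amplitudes over an arbitrary real closed field R
   (all amplitudes of the protocol are real). *)
From mathcomp Require Import all_boot all_order all_algebra.
Set Implicit Arguments. Unset Strict Implicit. Unset Printing Implicit Defensive.
Import Order.TTheory GRing.Theory Num.Theory.

(* 4-bit strings w = w_1 w_2 w_3 w_4, bit j (j : 'I_4) held by party j+1 *)
Definition word := {ffun 'I_4 -> bool}.

Definition weight (w : word) : nat := #|[set j | w j]|.

Definition O4 : {set word} := [set w | odd (weight w)].

Definition compl (w : word) : word := [ffun j => ~~ w j].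

Definition t_ (u w : word) : bool := w == u.
Definition f_ (u : word) (n : nat) (x : 'I_n -> word) : bool :=
  \big[addb/false]_(i < n) t_ u (x i).

Local Open Scope ring_scope.

Definition psi4 (R : rcfType) (v : word) : R :=
  if weight v == 1%N then (2 * Num.sqrt 2)^-1
  else if weight v == 3%N then - (2 * Num.sqrt 2)^-1
  else 0.

Definition hadamard (R : rcfType) (b b' : bool) : R :=
  (if b && b' then -1 else 1) / Num.sqrt 2.

Definition gate (R : rcfType) (c : bool) (b b' : bool) : R :=
  if c then hadamard R b b' else (b == b')%:R.

Definition amp (R : rcfType) (c a : word) : R :=
  \sum_(v : word) (\prod_(j < 4) gate R (c j) (a j) (v j)) * psi4 R v.

(* Born-rule probability of outcome a (amplitudes are real) *)
Definition prob (R : rcfType) (c a : word) : R := amp R c a ^+ 2.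

Definition choice (u x : word) : word := [ffun j => x j != u j].

Definition joint_prob (R : rcfType) (u : word) (n : nat)
  (x : 'I_n -> word) (a : 'I_n -> word) : R :=
  \prod_(i < n) prob R (choice u (x i)) (a i).

Definition p1 : 'I_4 := @Ordinal 4 0 isT.
Definition p2 : 'I_4 := @Ordinal 4 1 isT.
Definition p3 : 'I_4 := @Ordinal 4 2 isT.
Definition p4 : 'I_4 := @Ordinal 4 3 isT.

Definition view (n : nat) (x : 'I_n -> word) (j : 'I_4) : 'I_n -> bool :=
  fun i => x i j.

(* Main.v *)
Require Import Defs.
From mathcomp Require Import all_boot all_order all_algebra.
From mathcomp Require Import ring.
From mathcomp Require Import ring.
Import Order.TTheory GRing.Theory Num.Theory.
Local Open Scope ring_scope.

Definition mk (b0 b1 b2 b3 : bool) : word :=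
  [ffun j : 'I_4 => match val j with 0 => b0 | 1 => b1 | 2 => b2 | _ => b3 end]%N.

Lemma wordE (w : word) : w = mk (w p1) (w p2) (w p3) (w p4).
Proof.
apply/ffunP => j; rewrite ffunE.
case: j => [[|[|[|[|k]]]] Hk] //=; rewrite /p1 /p2 /p3 /p4; congr (w _); exact: val_inj.
Qed.

Lemma sum_word (V : nmodType) (F : word -> V) :
  \sum_(v : word) F v = \sum_(b0 : bool) \sum_(b1 : bool) \sum_(b2 : bool) \sum_(b3 : bool) F (mk b0 b1 b2 b3).
Proof.
rewrite (pair_bigA _ (fun b0 b1 => \sum_(b2 : bool) \sum_(b3 : bool) F (mk b0 b1 b2 b3))).
rewrite (pair_bigA _ (fun p b2 => \sum_(b3 : bool) F (mk p.1 p.2 b2 b3))).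
rewrite (pair_bigA _ (fun p b3 => F (mk p.1.1 p.1.2 p.2 b3))) /=.
rewrite (reindex (fun p : bool * bool * bool * bool => mk p.1.1.1 p.1.1.2 p.1.2 p.2)) //.
exists (fun w : word => (w p1, w p2, w p3, w p4)) => [[[[b0 b1] b2] b3]|w] _.
  by rewrite /= !ffunE.
by rewrite /= -wordE.
Qed.

Lemma weightE w : weight w = (w p1 + w p2 + w p3 + w p4)%N.
Proof.
rewrite /weight -sum1_card big_mkcond /= !big_ord_recl big_ord0 /= !inE.
rewrite /p1 /p2 /p3 /p4 /bump /=.
have -> : (lift ord0 ord0 : 'I_4) = Ordinal (isT : (1 < 4)%N) by apply: val_inj.
have -> : (lift ord0 (lift ord0 ord0) : 'I_4) = Ordinal (isT : (2 < 4)%N) by apply: val_inj.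
have -> : (lift ord0 (lift ord0 (lift ord0 ord0)) : 'I_4) = Ordinal (isT : (3 < 4)%N) by apply: val_inj.
have -> : (ord0 : 'I_4) = Ordinal (isT : (0 < 4)%N) by apply: val_inj.
by case: (w _); case: (w _); case: (w _); case: (w _).
Qed.
Definition gi (c b b' : bool) : int := if c then (if b && b' then -1 else 1) else (b==b')%:R.
Definition psiB (v0 v1 v2 v3 : bool) : int :=
  let w := (v0 + v1 + v2 + v3)%N in if w == 1%N then 1 else if w == 3%N then -1 else 0.
Definition sb (f : bool -> int) := f true + f false.
Definition isumB (c0 c1 c2 c3 a0 a1 a2 a3 : bool) : int :=
  sb (fun v0 => sb (fun v1 => sb (fun v2 => sb (fun v3 =>
   gi c0 a0 v0 * gi c1 a1 v1 * gi c2 a2 v2 * gi c3 a3 v3 * psiB v0 v1 v2 v3)))).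

Lemma key (c0 c1 c2 c3 a0 a1 a2 a3 : bool) : ~~ odd (c0 + c1 + c2 + c3) -> ~~ [&& c0, c1, c2 & c3] ->
  isumB c0 c1 c2 c3 a0 a1 a2 a3 != 0 -> a0 (+) a1 (+) a2 (+) a3 = ~~ [|| c0, c1, c2 | c3].
Proof.
by case: c0; case: c1; case: c2; case: c3; case: a0; case: a1; case: a2; case: a3; vm_compute.
Qed.

Lemma prod4 (R : comRingType) (F : 'I_4 -> R) : \prod_(j < 4) F j = F p1 * F p2 * F p3 * F p4.
Proof.
rewrite !big_ord_recl big_ord0 mulr1 !mulrA.
have -> : (lift ord0 ord0 : 'I_4) = p2 by apply: val_inj.
have -> : (lift ord0 (lift ord0 ord0) : 'I_4) = p3 by apply: val_inj.
have -> : (lift ord0 (lift ord0 (lift ord0 ord0)) : 'I_4) = p4 by apply: val_inj.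
have -> : (ord0 : 'I_4) = p1 by apply: val_inj.
by [].
Qed.

Section Amp.
Variable R : rcfType.
Definition gk (c : bool) : R := if c then (Num.sqrt 2)^-1 else 1.
Definition kk : R := (2 * Num.sqrt 2)^-1.

Lemma s2_neq0 : Num.sqrt (2:R) != 0.
Proof. by rewrite sqrtr_eq0 -ltNge ltr0n. Qed.

Lemma gateE c b b' : gate R c b b' = (gi c b b')%:~R * gk c.
Proof.
by case: c; case: b; case: b'; rewrite /gate /hadamard /gi /gk /= ?mulr1 ?mul1r ?mulN1r.
Qed.

Lemma psi4E v0 v1 v2 v3 : psi4 R (mk v0 v1 v2 v3) = (psiB v0 v1 v2 v3)%:~R * kk.
Proof.
rewrite /psi4 /psiB weightE !ffunE /= /kk.
by case: v0; case: v1; case: v2; case: v3; rewrite /= ?mul1r ?mulN1r ?mul0r.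
Qed.

Lemma ampE c a : amp R c a =
  (gk (c p1) * gk (c p2) * gk (c p3) * gk (c p4) * kk) *
  (isumB (c p1) (c p2) (c p3) (c p4) (a p1) (a p2) (a p3) (a p4))%:~R.
Proof.
rewrite /amp sum_word /isumB /sb !big_bool /=.
rewrite !prod4.
rewrite !gateE !psi4E !ffunE /=.
rewrite !(intrD, intrM).
ring.
Qed.

Lemma amp_neq0 c a : amp R c a != 0 ->
  isumB (c p1) (c p2) (c p3) (c p4) (a p1) (a p2) (a p3) (a p4) != 0.
Proof.
rewrite ampE; apply: contra => /eqP ->; by rewrite mulr0.
Qed.
End Amp.

Lemma word_eqP (x y : word) : x p1 = y p1 -> x p2 = y p2 -> x p3 = y p3 -> x p4 = y p4 -> x = y.
Proof. by move=> h1 h2 h3 h4; rewrite (wordE x) (wordE y) h1 h2 h3 h4. Qed.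

Lemma par_key (u x a : word) : u \in O4 -> x \in O4 -> x != compl u ->
  (exists R : rcfType, amp R (choice u x) a != 0) ->
  a p1 (+) a p2 (+) a p3 (+) a p4 = (x == u).
Proof.
move=> hu hx hxu [R /amp_neq0]; rewrite !ffunE => /key.
have hxu' : ~~ [&& x p1 != u p1, x p2 != u p2, x p3 != u p3 & x p4 != u p4].
  apply: contra hxu => /and4P [h1 h2 h3 h4]; apply/eqP; apply: word_eqP; rewrite !ffunE /=.
  - by move: h1; case: (x p1); case: (u p1).
  - by move: h2; case: (x p2); case: (u p2).
  - by move: h3; case: (x p3); case: (u p3).
  - by move: h4; case: (x p4); case: (u p4).
have hodd : ~~ odd ((x p1 != u p1) + (x p2 != u p2) + (x p3 != u p3) + (x p4 != u p4))%N.
  move: hu hx; rewrite !inE !weightE.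
  by case: (x p1); case: (u p1); case: (x p2); case: (u p2); case: (x p3); case: (u p3); case: (x p4); case: (u p4).
move=> /(_ hodd hxu') ->.
apply/idP/eqP.
- rewrite !negb_or => /and4P [h1 h2 h3 h4]; apply: word_eqP; by apply/eqP; rewrite -[_ == _]negbK.
- by move=> ->; rewrite !eqxx.
Qed.

Theorem theorem4 (R : rcfType) (u : word) (hu : u \in O4)
  (A : {set word}) (hA : A \subset O4 :\ compl u) (n : nat) (hn : (1 <= n)%N) :
  exists (send2 send3 send4 : ('I_n -> bool) -> ('I_n -> bool) -> bool)
         (out : ('I_n -> bool) -> ('I_n -> bool) -> bool -> bool -> bool -> bool),
  forall x : 'I_n -> word, (forall i, x i \in A) ->
  forall a : 'I_n -> word, joint_prob R u x a != 0 ->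
    out (view x p1) (view a p1)
        (send2 (view x p2) (view a p2))
        (send3 (view x p3) (view a p3))
        (send4 (view x p4) (view a p4)) = f_ u x.
Proof.
pose s (X b : 'I_n -> bool) := \big[addb/false]_(i < n) b i.
exists s, s, s, (fun X b b2 b3 b4 => s X b (+) b2 (+) b3 (+) b4).
move=> x hx a /prodf_neq0 ha.
rewrite /s /view /f_ -!big_split /=.
apply: eq_bigr => i _.
have hxi : x i \in O4 :\ compl u by apply: (subsetP hA).
move: hxi; rewrite !inE => /andP [hxu hxO].
rewrite /t_; apply: par_key => //.
  by rewrite inE.
exists R; have := ha i isT; rewrite /prob.
by apply: contra => /eqP ->; rewrite expr0n.
Qed.
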